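(* Let $\mathcal H_A,\mathcal H_B$ be finite-dimensional Hilbert spaces, $|0_A\rangle\in\mathcal H_A$, $|0_B\rangle\in\mathcal H_B$ unit vectors, $|0\rangle=|0_A\rangle\otimes|0_B\rangle$, and let $|\phi\rangle\in\mathcal H_A\otimes\mathcal H_B$ be a unit vector. Decompose $|\phi\rangle=|x\rangle\otimes|0_B\rangle+|y\rangle$ with $|x\rangle=(\mathbb 1_A\otimes\langle 0_B|)|\phi\rangle$ and $(\mathbb 1_A\otimes\langle 0_B|)|y\rangle=0$, and assume $|y\rangle\neq0$. Fix $0<\epsilon<1$, let $|\psi\rangle=(|0\rangle+\epsilon|\phi\rangle)/\sqrt{\mathcal N}$ with $\mathcal N=1+\epsilon^2+2\epsilon\,\mathrm{Re}\langle0|\phi\rangle$, $\rho_A=\operatorname{tr}_B|\psi\rangle\langle\psi|$, $\mu=\epsilon^2\langle y|y\rangle/\mathcal N$ and $\omega=\operatorname{tr}_B|y\rangle\langle y|/\langle y|y\rangle$. Then for every $0<\alpha<1$, $$\mu^\alpha\operatorname{tr}\omega^\alpha\le\operatorname{tr}\rho_A^\alpha\le(1-\mu)^\alpha+\mu^\alpha\operatorname{tr}\omega^\alpha,$$ equivalently $$S_\alpha(\omega)+\frac{\alpha}{1-\alpha}\log\mu\le S_\alpha(\rho_A)\le\frac{1}{1-\alpha}\log\Big[(1-\mu)^\alpha+\mu^\alpha e^{(1-\alpha)S_\alpha(\omega)}\Big].$$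
   Context: $S_\alpha(\rho)=\frac{1}{1-\alpha}\log\operatorname{tr}\rho^\alpha$. One has $\rho_A=(1-\mu)|v\rangle\langle v|+\mu\,\omega$ with $|v\rangle=(|0_A\rangle+\epsilon|x\rangle)/\sqrt{\mathcal N(1-\mu)}$ a unit vector. *)

(* Defs.v *)
From HB Require Import structures.
From mathcomp Require Import all_boot all_order all_algebra.
From mathcomp Require Import complex mxtens.
From mathcomp Require Import reals sequences exp.
Set Implicit Arguments. Unset Strict Implicit. Unset Printing Implicit Defensive.
Import Order.TTheory GRing.Theory Num.Theory.
Local Open Scope ring_scope.

Section QDefs.
Variable R : realType.
Local Notation C := (R[i]).

Definition adj {p q : nat} (M : 'M[C]_(p, q)) : 'M[C]_(q, p) := (map_mx conjc M)^T.

Definition braket {p : nat} (u v : 'cV[C]_p) : C := (adj u *m v) 0 0.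

Definition ketbra {p : nat} (u v : 'cV[C]_p) : 'M[C]_p := u *m adj v.

Definition tket {m n : nat} (a : 'cV[C]_m) (b : 'cV[C]_n) : 'cV[C]_(m * n) :=
  tensmx a b.

Definition ptraceB {m n : nat} (M : 'M[C]_(m * n)) : 'M[C]_m :=
  \matrix_(i < m, i' < m)
     \sum_(j < n) M (mxtens_index (i, j)) (mxtens_index (i', j)).

Definition contractB {m n : nat} (b : 'cV[C]_n) (phi : 'cV[C]_(m * n)) : 'cV[C]_m :=
  \col_(i < m) \sum_(j < n) conjc (b j 0) * phi (mxtens_index (i, j)) 0.

(* tr rho^alpha for a Hermitian (normal) matrix rho : sum of lambda_i^alpha over
   its eigenvalues (with multiplicity), via the spectral decomposition *)
Definition trpow {p : nat} (rho : 'M[C]_p) (alpha : R) : R :=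
  \sum_(i < p) powR (complex.Re (spectral_diag rho 0 i)) alpha.

Definition renyi {p : nat} (alpha : R) (rho : 'M[C]_p) : R :=
  (1 - alpha)^-1 * ln (trpow rho alpha).

End QDefs.

(* Main.v *)
Require Import Defs.
From HB Require Import structures.
From mathcomp Require Import all_boot all_order all_algebra.
From mathcomp Require Import complex mxtens.
From mathcomp Require Import reals sequences exp.
From mathcomp Require Import ring lra.
Import Order.TTheory GRing.Theory Num.Theory.
Local Open Scope ring_scope.
Set Implicit Arguments. Unset Strict Implicit.

Section Real.
Variable R : realType.

Lemma young (a t : R) : 0 < a < 1 -> 0 <= t -> powR t a <= a * t + (1 - a).
Proof.
move=> /andP[a0 a1] t0.
have [->|tn0] := eqVneq t 0.
  by rewrite powR0 ?gt_eqF // mulr0 add0r subr_ge0 ltW.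
have tp : 0 < t by rewrite lt_def tn0 t0.
rewrite /powR (negbTE tn0).
set L := ln t.
have tE : t = expR L by rewrite /L lnK.
have h1 : expR (a * L) * (1 + (1 - a) * L) <= t.
  rewrite tE -[in X in _ <= X](subrK (a * L) L) expRD mulrC.
  rewrite ler_pM2r ?expR_gt0 //.
  have -> : L - a * L = (1 - a) * L by ring.
  exact: expR_ge1Dx.
have h2 : expR (a * L) * (1 - a * L) <= 1.
  rewrite -[X in _ <= X](expRxMexpNx_1 (a * L)) ler_pM2l ?expR_gt0 //.
  exact: expR_ge1Dx.
have E : expR (a * L) = a * (expR (a * L) * (1 + (1 - a) * L))
           + (1 - a) * (expR (a * L) * (1 - a * L)) by ring.
rewrite E; apply: lerD; first by rewrite ler_pM2l.
by rewrite -[X in _ <= X]mulr1 ler_pM2l ?subr_gt0.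
Qed.

Lemma jensen (a : R) (I : finType) (w x : I -> R) : 0 < a < 1 ->
  (forall i, 0 <= w i) -> (forall i, 0 <= x i) -> \sum_i w i <= 1 ->
  \sum_i w i * powR (x i) a <= powR (\sum_i w i * x i) a.
Proof.
move=> ha w0 x0 w1; have /andP[a0 a1] := ha.
set s := \sum_i w i * x i.
have s0 : 0 <= s by apply: sumr_ge0 => i _; rewrite mulr_ge0.
have [sz|sn0] := eqVneq s 0.
  have H := psumr_eq0P (fun i _ => mulr_ge0 (w0 i) (x0 i)) sz.
  rewrite big1 ?powR_ge0 // => i _.
  have /eqP := H i isT.
  rewrite mulf_eq0 => /orP[/eqP->|/eqP->]; first by rewrite mul0r.
  by rewrite powR0 ?gt_eqF // mulr0.
have sp : 0 < s by rewrite lt_def sn0 s0.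
apply: (@le_trans _ _ (\sum_i w i * (powR s a * (a * (x i / s) + (1 - a))))).
  apply: ler_sum => i _; apply: ler_wpM2l => //.
  have xE : x i = s * (x i / s) by rewrite mulrCA divff ?mulr1.
  rewrite [in X in X <= _]xE powRM ?divr_ge0 ?(ltW sp) //.
  apply: ler_wpM2l; first exact: powR_ge0.
  by apply: young => //; rewrite divr_ge0 // ltW.
have -> : \sum_i w i * (powR s a * (a * (x i / s) + (1 - a)))
   = powR s a * (a / s * s + (1 - a) * \sum_i w i).
  rewrite (eq_bigr (fun i => powR s a * a / s * (w i * x i) + powR s a * (1 - a) * w i)); last by move=> i _; ring.
  rewrite big_split /= -!mulr_sumr -/s; ring.
rewrite divfK // -[X in _ <= X]mulr1; apply: ler_wpM2l; first exact: powR_ge0.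
have : (1 - a) * \sum_i w i <= (1 - a) by rewrite -[X in _ <= X]mulr1 ler_wpM2l // subr_ge0 ltW.
lra.
Qed.

End Real.

Section Mx.
Variable R : realType.
Local Notation C := (R[i]).
Local Open Scope complex_scope.

Definition nrm2 (z : C) : R := (complex.Re z) ^+ 2 + (complex.Im z) ^+ 2.

Lemma nrm2_ge0 z : 0 <= nrm2 z.
Proof. by rewrite /nrm2 addr_ge0 // sqr_ge0. Qed.

Lemma mul_conjc z : z * conjc z = (nrm2 z)%:C.
Proof.
case: z => a b; rewrite /nrm2 /=; apply/eqP; rewrite eq_complex /=.
by apply/andP; split; apply/eqP; ring.
Qed.

Lemma nrm2_real (r : R) : nrm2 r%:C = r ^+ 2.
Proof. by rewrite /nrm2 /= expr0n /= addr0. Qed.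

Lemma conjc_real' (r : R) : conjc (r%:C) = r%:C.
Proof. by rewrite /= oppr0. Qed.

Lemma adjE p q (A : 'M[C]_(p, q)) i j : adj A i j = conjc (A j i).
Proof. by rewrite /adj !mxE. Qed.

Lemma adjM p q r (A : 'M[C]_(p, q)) (B : 'M[C]_(q, r)) :
  adj (A *m B) = adj B *m adj A.
Proof. by rewrite /adj map_mxM trmx_mul. Qed.

Lemma adjK p q (A : 'M[C]_(p, q)) : adj (adj A) = A.
Proof. by apply/matrixP => i j; rewrite !adjE conjcK. Qed.

Lemma adjD p q (A B : 'M[C]_(p, q)) : adj (A + B) = adj A + adj B.
Proof. by apply/matrixP => i j; rewrite /adj !mxE rmorphD. Qed.

Lemma adjZr p q (r : R) (A : 'M[C]_(p, q)) : adj (r%:C *: A) = r%:C *: adj A.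
Proof. by apply/matrixP => i j; rewrite /adj !mxE rmorphM /= oppr0. Qed.

Lemma adj_diag_real p (r : 'I_p -> R) :
  adj (diag_mx (\row_k (r k)%:C)) = diag_mx (\row_k (r k)%:C).
Proof.
apply/matrixP => i j; rewrite adjE !mxE.
have [->|ne] := eqVneq i j; first by rewrite /= mulr1n; apply/eqP; rewrite eq_complex /= oppr0 !eqxx.
by rewrite /= !mulr0n; apply/eqP; rewrite eq_complex /= oppr0 !eqxx.
Qed.


Lemma sumC (I : finType) (f : I -> R) : (\sum_i f i)%:C = \sum_i (f i)%:C :> C.
Proof. exact: (rmorph_sum (real_complex R)). Qed.

Lemma realCM (x y : R) : (x * y)%:C = x%:C * y%:C :> C.
Proof. exact: (rmorphM (real_complex R)). Qed.

Lemma realCV (x : R) : (x^-1)%:C = (x%:C)^-1 :> C.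
Proof. by rewrite (fmorphV (real_complex R)). Qed.

Lemma Re_real (x : R) : complex.Re (x%:C : C) = x.
Proof. by []. Qed.

Lemma Re_sum (I : finType) (F : I -> C) :
  complex.Re (\sum_i F i) = \sum_i complex.Re (F i).
Proof.
elim/big_rec2: _ => [//|i y1 y2 _ <-].
by case: (F i) => ? ?; case: y2 => ? ?.
Qed.

Lemma Re_realD (x y : R) : complex.Re (x%:C + y%:C : C) = x + y.
Proof. by []. Qed.

Lemma realC_inj (x y : R) : x%:C = y%:C :> C -> x = y.
Proof. by case. Qed.

Lemma dilation (a : R) m p (M : 'M[C]_(m, p)) (nu : 'rV[C]_m) :
  0 < a < 1 -> M *m adj M = diag_mx nu ->
  \sum_(k < m) powR (complex.Re (nu 0 k)) a
    <= \sum_(i < p) powR (\sum_(k < m) nrm2 (M k i)) a.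
Proof.
move=> ha hM; have /andP[a0 a1] := ha.
pose n k := \sum_(i < p) nrm2 (M k i).
have n0 k : 0 <= n k by apply: sumr_ge0 => i _; exact: nrm2_ge0.
have nuC k : nu 0 k = (n k)%:C.
  have := congr1 (fun X : 'M[C]_m => X k k) hM; rewrite !mxE eqxx mulr1n => <-.
  rewrite sumC; apply: eq_bigr => i _; by rewrite adjE mul_conjc.
have nuE k : complex.Re (nu 0 k) = n k by rewrite nuC.
pose T i k := nrm2 (M k i) / n k.
have T0 i k : 0 <= T i k by rewrite divr_ge0 // nrm2_ge0.
have Tn i k : T i k * n k = nrm2 (M k i).
  have [nz|nn0] := eqVneq (n k) 0; last by rewrite divfK.
  rewrite nz mulr0.
  have H := psumr_eq0P (fun i _ => nrm2_ge0 (M k i)) nz.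
  by rewrite H.
have Tsum k : \sum_i T i k * powR (n k) a = powR (n k) a.
  have [nz|nn0] := eqVneq (n k) 0.
    by rewrite nz powR0 ?gt_eqF // big1 // => i _; rewrite mulr0.
  by rewrite -mulr_suml -mulr_suml divff // mul1r.
have Trow i : \sum_k T i k <= 1.
  pose D := diag_mx (\row_k ((n k)^-1)%:C) : 'M[C]_m.
  pose Mp := adj M *m D *m M.
  have MpE : Mp i i = (\sum_k T i k)%:C.
    rewrite /Mp /D mul_mx_diag !mxE sumC; apply: eq_bigr => k _.
    by rewrite !mxE /T realCM -mul_conjc; ring.
  have MpH : adj Mp = Mp.
    by rewrite /Mp !adjM adjK adj_diag_real mulmxA.
  have DD : D *m diag_mx nu *m D = D.
    rewrite /D !mulmx_diag; congr diag_mx; apply/rowP => k; rewrite !mxE nuC.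
    have [nz|nn0] := eqVneq (n k) 0; first by rewrite nz invr0 !mulr0.
    by rewrite -!realCM mulVf // mul1r.
  have Mpid : Mp *m Mp = Mp.
    rewrite /Mp -!mulmxA [M *m (adj M *m _)]mulmxA hM.
    by rewrite [D *m (diag_mx nu *m _)]mulmxA [D *m _ *m (D *m M)]mulmxA DD.
  have := congr1 (fun X : 'M[C]_p => X i i) Mpid; rewrite MpE mxE.
  rewrite (eq_bigr (fun l => (nrm2 (Mp i l))%:C)); last first.
    by move=> l _; rewrite -[in Mp l i]MpH adjE mul_conjc.
  rewrite -sumC => /realC_inj sE.
  set s := \sum_k T i k in sE *.
  have s0 : 0 <= s by apply: sumr_ge0.
  have : nrm2 (Mp i i) <= s.
    rewrite -sE (bigD1 i) //= lerDl; apply: sumr_ge0 => l _; exact: nrm2_ge0.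
  rewrite MpE nrm2_real expr2 => hs.
  rewrite leNgt; apply/negP => s1.
  have sp : 0 < s by apply: lt_trans s1.
  have : s < s * s by rewrite ltr_pMr.
  by rewrite ltNge hs.
rewrite (eq_bigr (fun k => \sum_i T i k * powR (n k) a)); last first.
  by move=> k _; rewrite Tsum nuE.
rewrite exchange_big /=; apply: ler_sum => i _.
rewrite [X in _ <= powR X _](eq_bigr (fun k => T i k * n k)); last by move=> k _; rewrite Tn.
exact: jensen.
Qed.

Lemma unit_rows m (W : 'M[C]_m) k : W *m adj W = 1%:M -> \sum_j nrm2 (W k j) = 1.
Proof.
move=> hW; have := congr1 (fun X : 'M[C]_m => X k k) hW; rewrite !mxE eqxx /=.
rewrite (eq_bigr (fun j => (nrm2 (W k j))%:C)); last by move=> j _; rewrite adjE mul_conjc.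
by rewrite -sumC => /realC_inj.
Qed.

Lemma unit_cols m (W : 'M[C]_m) j : adj W *m W = 1%:M -> \sum_k nrm2 (W k j) = 1.
Proof.
move=> hW; have := congr1 (fun X : 'M[C]_m => X j j) hW; rewrite !mxE eqxx /=.
rewrite (eq_bigr (fun k => (nrm2 (W k j))%:C)); last by move=> k _; rewrite adjE mulrC mul_conjc.
by rewrite -sumC => /realC_inj.
Qed.

Lemma lowerb (a c : R) m (W : 'M[C]_m) (lam nu : 'I_m -> R) :
  0 < a < 1 -> 0 <= c -> W *m adj W = 1%:M -> adj W *m W = 1%:M ->
  (forall j, 0 <= lam j) ->
  (forall k, c * \sum_j nrm2 (W k j) * lam j <= nu k) ->
  \sum_j powR (c * lam j) a <= \sum_k powR (nu k) a.
Proof.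
move=> ha c0 hW1 hW2 l0 hnu; have /andP[a0 a1] := ha.
apply: (@le_trans _ _ (\sum_k \sum_j nrm2 (W k j) * powR (c * lam j) a)).
  rewrite exchange_big /=; apply: ler_sum => j _.
  by rewrite -mulr_suml unit_cols // mul1r.
apply: ler_sum => k _.
apply: (@le_trans _ _ (powR (\sum_j nrm2 (W k j) * (c * lam j)) a)).
  apply: jensen => //; first by move=> j; exact: nrm2_ge0.
    by move=> j; rewrite mulr_ge0.
  by rewrite unit_rows.
have s0 : 0 <= \sum_j nrm2 (W k j) * (c * lam j).
  by apply: sumr_ge0 => j _; rewrite !mulr_ge0 // nrm2_ge0.
have e : \sum_j nrm2 (W k j) * (c * lam j) = c * \sum_j nrm2 (W k j) * lam j.
  by rewrite mulr_sumr; apply: eq_bigr => j _; ring.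
apply: ge0_ler_powR; rewrite ?nnegrE ?(ltW a0) //.
  by apply: le_trans (hnu k); rewrite -e.
by rewrite e.
Qed.

Section Spec.
Local Open Scope sesquilinear_scope.
Lemma tstar_adj p q (M : 'M[C]_(p, q)) : (M ^t*) = adj M.
Proof. by apply/matrixP => i j; rewrite !mxE. Qed.

Lemma spec_decomp m (A : 'M[C]_m) : adj A = A ->
  spectralmx A *m adj (spectralmx A) = 1%:M /\
  adj (spectralmx A) *m spectralmx A = 1%:M /\
  spectralmx A *m A *m adj (spectralmx A) = diag_mx (spectral_diag A).
Proof.
move=> hA.
have PU := spectral_unitarymx A.
have h1 : spectralmx A *m adj (spectralmx A) = 1%:M.
  by rewrite -tstar_adj; apply/unitarymxP.
have h2 := mulmx1C h1.
have hn : A \is normalmx by apply/normalmxP; rewrite tstar_adj hA.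
have /orthomx_spectralP hE := hn.
have hinv : invmx (spectralmx A) = adj (spectralmx A).
  by rewrite invmx_unitary // tstar_adj.
split => //; split => //.
rewrite {2}hE hinv !mulmxA h1 mul1mx -mulmxA h1 mulmx1 //.
Qed.
End Spec.

Lemma nrm2M (x y : C) : nrm2 (x * y) = nrm2 x * nrm2 y.
Proof.
apply: realC_inj; rewrite realCM -!mul_conjc rmorphM /=.
by rewrite -!/(conjc _); ring.
Qed.

Lemma diag_XadjX p q (X : 'M[C]_(p, q)) k :
  (X *m adj X) k k = (\sum_l nrm2 (X k l))%:C.
Proof. by rewrite !mxE sumC; apply: eq_bigr => l _; rewrite adjE mul_conjc. Qed.

Lemma diag_adjXX p q (X : 'M[C]_(p, q)) k :
  (adj X *m X) k k = (\sum_l nrm2 (X l k))%:C.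
Proof. by rewrite !mxE sumC; apply: eq_bigr => l _; rewrite adjE mulrC mul_conjc. Qed.

Lemma adj_row_mx p q1 q2 (X : 'M[C]_(p, q1)) (Y : 'M[C]_(p, q2)) :
  adj (row_mx X Y) = col_mx (adj X) (adj Y).
Proof. by rewrite /adj map_row_mx tr_row_mx. Qed.

Lemma adj_scale_real p q (r : R) (X : 'M[C]_(p, q)) : adj (r%:C *: X) = r%:C *: adj X.
Proof. exact: adjZr. Qed.

Lemma key (a c d : R) m r (u : 'cV[C]_m) (Y : 'M[C]_(m, r)) :
  0 < a < 1 -> 0 <= c -> 0 <= d ->
  powR c a * trpow (d%:C *: (Y *m adj Y)) a
    <= trpow (u *m adj u + c%:C *: (d%:C *: (Y *m adj Y))) a
    <= powR (complex.Re ((adj u *m u) 0 0)) a + powR c a * trpow (d%:C *: (Y *m adj Y)) a.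
Proof.
move=> ha c0 d0; have /andP[a0 a1] := ha.
set B := d%:C *: (Y *m adj Y).
set A := u *m adj u + c%:C *: B.
have hB : adj B = B by rewrite /B adjZr adjM adjK.
have hA : adj A = A by rewrite /A adjD adjM adjK adjZr hB.
have [hP1 [hP2 hPA]] := spec_decomp hA.
have [hQ1 [hQ2 hQB]] := spec_decomp hB.
rewrite /trpow.
set P := spectralmx A in hP1 hP2 hPA *.
set Q := spectralmx B in hQ1 hQ2 hQB *.
set nu := spectral_diag A in hPA *.
set lam := spectral_diag B in hQB *.
pose lr j := complex.Re (lam 0 j).
have lamE j : lam 0 j = (d * \sum_l nrm2 ((Q *m Y) j l))%:C.
  have := congr1 (fun X : 'M[C]_m => X j j) hQB; rewrite [diag_mx _ _ _]mxE eqxx mulr1n => <-.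
  rewrite /B -scalemxAr -scalemxAl mxE realCM -diag_XadjX adjM !mulmxA. by congr (_ * _).
have lamR j : lam 0 j = (lr j)%:C by rewrite /lr lamE.
have lr0 j : 0 <= lr j.
  rewrite /lr lamE; apply: mulr_ge0 => //; apply: sumr_ge0 => l _; exact: nrm2_ge0.
pose W := P *m adj Q.
have hW1 : W *m adj W = 1%:M.
  by rewrite /W adjM adjK mulmxA -[P *m adj Q *m Q]mulmxA hQ2 mulmx1 hP1.
have hW2 : adj W *m W = 1%:M.
  by rewrite /W adjM adjK mulmxA -[Q *m adj P *m P]mulmxA hP2 mulmx1 hQ1.
have BE : B = adj Q *m diag_mx lam *m Q.
  by rewrite -hQB !mulmxA hQ2 mul1mx -mulmxA hQ2 mulmx1.
have PAE : diag_mx nu = (P *m u) *m adj (P *m u) + c%:C *: (W *m diag_mx lam *m adj W).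
  rewrite -hPA /W !adjM adjK /A mulmxDr mulmxDl -scalemxAr -scalemxAl BE !mulmxA.
  by congr (_ + _ *: _).
have nuRe k : complex.Re (nu 0 k)
    = nrm2 ((P *m u) k 0) + c * \sum_j nrm2 (W k j) * lr j.
  have := congr1 (fun X : 'M[C]_m => X k k) PAE.
  rewrite [diag_mx _ _ _]mxE eqxx mulr1n => ->.
  have EA (X Z : 'M[C]_m) : (X + Z) k k = X k k + Z k k by rewrite mxE.
  have ES (x : C) (X : 'M[C]_m) : (x *: X) k k = x * X k k by rewrite mxE.
  have EM (X Z : 'M[C]_m) : (X *m Z) k k = \sum_j X k j * Z j k by rewrite mxE.
  rewrite EA ES diag_XadjX big_ord1 EM.
  rewrite (eq_bigr (fun j => (nrm2 (W k j) * lr j)%:C)); last first.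
    by move=> j _; rewrite mul_mx_diag mxE adjE lamR mulrAC mul_conjc realCM.
  by rewrite -sumC -realCM Re_realD.
have cl : powR c a * \sum_i powR (complex.Re (lam 0 i)) a = \sum_j powR (c * lr j) a.
  by rewrite mulr_sumr; apply: eq_bigr => j _; rewrite powRM.
rewrite cl; apply/andP; split.
  apply: (lowerb ha c0 hW1 hW2 lr0) => k.
  by rewrite nuRe lerDr nrm2_ge0.
pose sq := \row_j (Num.sqrt (c * lr j))%:C : 'rV[C]_m.
have sqsq : diag_mx sq *m diag_mx sq = c%:C *: diag_mx lam.
  apply/matrixP => i j; rewrite mulmx_diag !mxE lamR -realCM -expr2 sqr_sqrtr ?mulr_ge0 //.
  have [->|ne] := eqVneq i j; first by rewrite !mulr1n realCM.
  by rewrite !mulr0n mulr0.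
pose Rm := row_mx (P *m u) (W *m diag_mx sq).
have hR : Rm *m adj Rm = diag_mx nu.
  have adjsq : adj (diag_mx sq) = diag_mx sq.
    exact: (adj_diag_real (fun j => Num.sqrt (c * lr j))).
  rewrite /Rm adj_row_mx mul_row_col PAE !adjM adjsq.
  rewrite !mulmxA -[W *m diag_mx sq *m diag_mx sq]mulmxA sqsq.
  rewrite -scalemxAr -!scalemxAl.
  by congr (_ + _ *: _).
have := dilation ha hR.
rewrite big_split_ord big_ord1.
have uE : \sum_k nrm2 (Rm k (lshift m ord0)) = complex.Re ((adj u *m u) 0 0).
  have : adj (P *m u) *m (P *m u) = adj u *m u.
    by rewrite adjM mulmxA -(mulmxA (adj u)) hP2 mulmx1.
  move/(congr1 (fun X : 'M[C]_1 => X 0 0)) => <-.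
  rewrite diag_adjXX Re_real.
  by apply: eq_bigr => k _; rewrite /Rm row_mxEl.
have wE j : \sum_k nrm2 (Rm k (rshift 1 j)) = c * lr j.
  rewrite (eq_bigr (fun k => nrm2 (W k j) * (c * lr j))).
    by rewrite -mulr_suml unit_cols // mul1r.
  have sqE : sq 0 j = (Num.sqrt (c * lr j))%:C by rewrite mxE.
  move=> k _; rewrite /Rm row_mxEr mul_mx_diag mxE nrm2M sqE nrm2_real.
  by rewrite sqr_sqrtr // mulr_ge0.
move=> H; apply: le_trans H _; rewrite uE.
rewrite (eq_bigr (fun j => powR (c * lr j) a)) //.
by move=> j _; rewrite wE.
Qed.

Lemma eig_psd (d : R) m r (Y : 'M[C]_(m, r)) : 0 <= d ->
  (forall j, 0 <= complex.Re (spectral_diag (d%:C *: (Y *m adj Y)) 0 j)) /\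
  \sum_j complex.Re (spectral_diag (d%:C *: (Y *m adj Y)) 0 j)
    = d * \sum_i \sum_l nrm2 (Y i l).
Proof.
move=> d0.
set B := d%:C *: (Y *m adj Y).
have hB : adj B = B by rewrite /B adjZr adjM adjK.
have [hQ1 [hQ2 hQB]] := spec_decomp hB.
set Q := spectralmx B in hQ1 hQ2 hQB *.
set lam := spectral_diag B in hQB *.
split.
  move=> j.
  have := congr1 (fun X : 'M[C]_m => X j j) hQB; rewrite [diag_mx _ _ _]mxE eqxx mulr1n => <-.
  rewrite /B -scalemxAr -scalemxAl mxE.
  have -> : d%:C * (Q *m (Y *m adj Y) *m adj Q) j j = (d * \sum_l nrm2 ((Q *m Y) j l))%:C.
    by rewrite realCM -diag_XadjX adjM !mulmxA.
  rewrite Re_real; apply: mulr_ge0 => //; apply: sumr_ge0 => l _; exact: nrm2_ge0.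
have tr1 : \tr (diag_mx lam) = \tr B.
  by rewrite -hQB mxtrace_mulC mulmxA hQ2 mul1mx.
have : \sum_j lam 0 j = (d * \sum_i \sum_l nrm2 (Y i l))%:C.
  rewrite -[LHS](mxtrace_diag lam) tr1 /mxtrace realCM sumC mulr_sumr.
  apply: eq_bigr => i _.
  by rewrite /B mxE diag_XadjX.
move/(congr1 (@complex.Re R)); rewrite Re_real => <-.
by rewrite Re_sum.
Qed.

Lemma trpow_pos (a d : R) m r (Y : 'M[C]_(m, r)) : 0 <= d ->
  d * \sum_i \sum_l nrm2 (Y i l) = 1 ->
  0 < trpow (d%:C *: (Y *m adj Y)) a.
Proof.
move=> d0 h1; have [h0 hs] := eig_psd Y d0.
rewrite /trpow.
set lam := spectral_diag _ in h0 hs *.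
case: (pickP (fun j => 0 < complex.Re (lam 0 j))) => [j hj|hn].
  rewrite (bigD1 j) //=; apply: (lt_le_trans (powR_gt0 a hj)).
  by rewrite lerDl; apply: sumr_ge0 => k _; exact: powR_ge0.
have : \sum_j complex.Re (lam 0 j) = 0.
  apply: big1 => j _; apply/eqP; rewrite eq_le h0 andbT leNgt.
  by have := hn j => /= ->.
by rewrite hs h1 => /eqP; rewrite oner_eq0.
Qed.

End Mx.

Section Tens.
Variable R : realType.
Local Notation C := (R[i]).
Local Open Scope complex_scope.

Lemma sum_tens (V : nmodType) m n (F : 'I_(m * n) -> V) :
  \sum_k F k = \sum_(i < m) \sum_(j < n) F (mxtens_index (i, j)).
Proof.
rewrite pair_big (reindex (@mxtens_index m n)) /=; last first.
  by exists (@mxtens_unindex m n) => k _; rewrite (mxtens_indexK, mxtens_unindexK).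
by apply: eq_bigr => -[i j].
Qed.

Lemma tketE m n (a : 'cV[C]_m) (b : 'cV[C]_n) i j :
  tket a b (mxtens_index (i, j)) 0 = a i 0 * b j 0.
Proof.
rewrite /tket /tensmx mxE mxtens_indexK.
by case: (mxtens_unindex _) => p q /=; rewrite (ord1 p) (ord1 q).
Qed.

Lemma ptraceB_scale m n (r : C) (M : 'M[C]_(m * n)) :
  ptraceB (r *: M) = r *: ptraceB M.
Proof.
apply/matrixP => i i'; rewrite !mxE mulr_sumr; apply: eq_bigr => j _; by rewrite mxE.
Qed.

Lemma ptraceB_trace m n (M : 'M[C]_(m * n)) :
  \sum_i ptraceB M i i = \sum_k M k k.
Proof. by rewrite sum_tens; apply: eq_bigr => i _; rewrite mxE. Qed.

Lemma ketbraE p (w : 'cV[C]_p) k l : ketbra w w k l = w k 0 * conjc (w l 0).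
Proof. by rewrite /ketbra mxE big_ord1 adjE. Qed.

Lemma conjcD' (x y : C) : conjc (x + y) = conjc x + conjc y.
Proof. exact: rmorphD. Qed.
Lemma conjcM' (x y : C) : conjc (x * y) = conjc x * conjc y.
Proof. exact: rmorphM. Qed.

Lemma conjc_sum (I : finType) (F : I -> C) : conjc (\sum_i F i) = \sum_i conjc (F i).
Proof. exact: (rmorph_sum (@conjc R)). Qed.

Lemma ptrace_core m n (t : 'cV[C]_m) (b : 'cV[C]_n) (Y : 'M[C]_(m, n)) (e : R)
    (w : 'cV[C]_(m * n)) :
  (forall i j, w (mxtens_index (i, j)) 0 = t i 0 * b j 0 + e%:C * Y i j) ->
  \sum_j conjc (b j 0) * b j 0 = 1 ->
  (forall i, \sum_j conjc (b j 0) * Y i j = 0) ->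
  ptraceB (ketbra w w) = t *m adj t + (e ^+ 2)%:C *: (Y *m adj Y).
Proof.
move=> hw hb hZ; apply/matrixP => i i'.
have E1 : (t *m adj t) i i' = t i 0 * conjc (t i' 0) by rewrite mxE big_ord1 adjE.
have E2 : (Y *m adj Y) i i' = \sum_j Y i j * conjc (Y i' j).
  by rewrite mxE; apply: eq_bigr => j _; rewrite adjE.
have E3 : \sum_j b j 0 * conjc (Y i' j) = 0.
  transitivity (conjc (\sum_j conjc (b j 0) * Y i' j)); last by rewrite hZ conjc0.
  rewrite conjc_sum; apply: eq_bigr => j _; by rewrite conjcM' conjcK mulrC.
rewrite [LHS]mxE [RHS]mxE [X in _ = _ + X]mxE E1 E2.
rewrite (eq_bigr (fun j => t i 0 * conjc (t i' 0) * (conjc (b j 0) * b j 0)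
     + e%:C * t i 0 * (b j 0 * conjc (Y i' j))
     + e%:C * conjc (t i' 0) * (conjc (b j 0) * Y i j)
     + (e ^+ 2)%:C * (Y i j * conjc (Y i' j)))); last first.
  move=> j _; rewrite ketbraE !hw conjcD' !conjcM' conjc_real'.
  rewrite realCM; ring.
rewrite !big_split /= -!mulr_sumr hb E3 hZ; ring.
Qed.

Lemma braketE p (u v : 'cV[C]_p) : braket u v = \sum_k conjc (u k 0) * v k 0.
Proof. by rewrite /braket mxE; apply: eq_bigr => k _; rewrite adjE. Qed.

Lemma braket_nrm p (v : 'cV[C]_p) : braket v v = (\sum_k nrm2 (v k 0))%:C.
Proof. exact: diag_adjXX. Qed.

Lemma nrm2_eq0 (z : C) : nrm2 z = 0 -> z = 0.
Proof.
move=> h; have : z * conjc z = 0 by rewrite mul_conjc h.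
by move/eqP; rewrite mulf_eq0 conjc_eq0 orbb => /eqP.
Qed.

Lemma nrm2_sc (r : R) (z : C) : nrm2 (r%:C * z) = r ^+ 2 * nrm2 z.
Proof. by rewrite nrm2M nrm2_real. Qed.

Lemma ptraceB_ketbra m n (v : 'cV[C]_(m * n)) :
  ptraceB (ketbra v v) =
  (\matrix_(i < m, j < n) v (mxtens_index (i, j)) 0) *m
    adj (\matrix_(i < m, j < n) v (mxtens_index (i, j)) 0).
Proof.
apply/matrixP => i i'; rewrite !mxE; apply: eq_bigr => j _.
by rewrite ketbraE adjE !mxE.
Qed.

Lemma ketbra_scale p (r : R) (v : 'cV[C]_p) :
  ketbra (r%:C *: v) (r%:C *: v) = (r ^+ 2)%:C *: ketbra v v.
Proof.
apply/matrixP => k l; rewrite [RHS]mxE !ketbraE !mxE conjcM' conjc_real' realCM; ring.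
Qed.

Lemma mxEadd p q (A B : 'M[C]_(p, q)) k l : (A + B) k l = A k l + B k l.
Proof. by rewrite mxE. Qed.
Lemma mxEsub p q (A B : 'M[C]_(p, q)) k l : (A - B) k l = A k l - B k l.
Proof. by rewrite !mxE. Qed.
Lemma mxEscale p q (c : C) (A : 'M[C]_(p, q)) k l : (c *: A) k l = c * A k l.
Proof. by rewrite mxE. Qed.

Lemma nrm2N (z : C) : nrm2 (- z) = nrm2 z.
Proof. by case: z => a b; rewrite /nrm2 /= !sqrrN. Qed.

Lemma cplx_id (e : R) (B : C) :
  1 + e%:C * B + e%:C * conjc B + (e ^+ 2)%:C = (1 + e ^+ 2 + 2 * e * complex.Re B)%:C.
Proof.
case: B => a b; apply/eqP; rewrite eq_complex /=.
by apply/andP; split; apply/eqP; ring.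
Qed.

End Tens.

Unset Implicit Arguments.

Lemma id_hw (R : realType) (A B E P X : R[i]) :
  A * B + E * P = (A + E * X) * B + E * (P - X * B).
Proof. ring. Qed.

Lemma id_hZ (R : realType) (cb P X B : R[i]) :
  cb * (P - X * B) = cb * P - X * (cb * B).
Proof. ring. Qed.

Lemma id_N (R : realType) (k p : R[i]) (e : R) :
  conjc (k + e%:C%C * p) * (k + e%:C%C * p) = conjc k * k + e%:C%C * (conjc k * p)
   + e%:C%C * conjc (conjc k * p) + (e ^+ 2)%:C%C * (conjc p * p).
Proof. rewrite conjcD' !conjcM' conjcK conjc_real' realCM; ring. Qed.

Lemma realCD (R : realType) (x y : R) : (x + y)%:C%C = x%:C%C + y%:C%C :> R[i].
Proof. exact: rmorphD. Qed.

Theorem mainTheorem3 (R : realType) (m n : nat)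
    (a0 : 'cV[R[i]]_m) (b0 : 'cV[R[i]]_n) (phi : 'cV[R[i]]_(m * n))
    (eps alpha : R) :
  braket a0 a0 = 1 -> braket b0 b0 = 1 -> braket phi phi = 1 ->
  let ket0 := tket a0 b0 in
  let x := contractB b0 phi in
  let y := phi - tket x b0 in
  y != 0 ->
  0 < eps < 1 ->
  let N := 1 + eps ^+ 2 + 2 * eps * complex.Re (braket ket0 phi) in
  let psi := ((Num.sqrt N)^-1)%:C%C *: (ket0 + eps%:C%C *: phi) in
  let rhoA := ptraceB (ketbra psi psi) in
  let yy := complex.Re (braket y y) in
  let mu := eps ^+ 2 * yy / N in
  let omega := (yy^-1)%:C%C *: ptraceB (ketbra y y) in
  0 < alpha < 1 ->
  (powR mu alpha * trpow omega alpha <= trpow rhoA alpha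
   <= powR (1 - mu) alpha + powR mu alpha * trpow omega alpha)
  /\
  (renyi alpha omega + alpha / (1 - alpha) * ln mu <= renyi alpha rhoA
   <= (1 - alpha)^-1 * ln (powR (1 - mu) alpha
                          + powR mu alpha * expR ((1 - alpha) * renyi alpha omega))).
Proof.
move=> ha hb hphi ket0 x y yn0 /andP[e0 e1] N psi rhoA yy mu omega hal.
Local Open Scope complex_scope.
pose Yd := \matrix_(i < m, j < n) y (mxtens_index (i, j)) 0.
pose t := a0 + eps%:C *: x.
pose w := ket0 + eps%:C *: phi.
have hbb : \sum_j conjc (b0 j 0) * b0 j 0 = 1 by rewrite -braketE.
have hx i : x i 0 = \sum_j conjc (b0 j 0) * phi (mxtens_index (i, j)) 0 by rewrite /x mxE.
have hy i j : y (mxtens_index (i, j)) 0 = phi (mxtens_index (i, j)) 0 - x i 0 * b0 j 0.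
  by rewrite /y mxEsub tketE.
have hw i j : w (mxtens_index (i, j)) 0 = t i 0 * b0 j 0 + eps%:C * Yd i j.
  rewrite /w mxEadd mxEscale tketE /t mxEadd mxEscale /Yd mxE hy.
  move: (phi _ 0) (x i 0) (a0 i 0) (b0 j 0) (eps%:C) => P X A B E. exact: id_hw.
have hZ i : \sum_j conjc (b0 j 0) * Yd i j = 0.
  transitivity (x i 0 - x i 0 * \sum_j conjc (b0 j 0) * b0 j 0); last by rewrite hbb mulr1 subrr.
  rewrite {1}hx mulr_sumr -sumrB; apply: eq_bigr => j _; rewrite /Yd mxE hy; exact: id_hZ.
have hcore := ptrace_core hw hbb hZ.
have na : \sum_i nrm2 (a0 i 0) = 1 by apply: realC_inj; rewrite -braket_nrm ha.
have nb : \sum_i nrm2 (b0 i 0) = 1 by apply: realC_inj; rewrite -braket_nrm hb.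
have nphi : \sum_i nrm2 (phi i 0) = 1 by apply: realC_inj; rewrite -braket_nrm hphi.
have nk : \sum_k nrm2 (ket0 k 0) = 1.
  rewrite sum_tens; transitivity (\sum_i nrm2 (a0 i 0) * \sum_j nrm2 (b0 j 0)).
    by apply: eq_bigr => i _; rewrite mulr_sumr; apply: eq_bigr => j _; rewrite tketE nrm2M.
  by rewrite -mulr_suml na nb mul1r.
have k00 : braket ket0 ket0 = 1 by rewrite braket_nrm nk.
have yyE : yy = \sum_i \sum_j nrm2 (Yd i j).
  rewrite /yy braket_nrm Re_real sum_tens; apply: eq_bigr => i _; apply: eq_bigr => j _.
  by rewrite /Yd mxE.
have Nw : \sum_k nrm2 (w k 0) = N.
  apply: realC_inj; rewrite -braket_nrm braketE.
  rewrite (eq_bigr (fun k => conjc (ket0 k 0) * ket0 k 0 + eps%:C * (conjc (ket0 k 0) * phi k 0)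
   + eps%:C * conjc (conjc (ket0 k 0) * phi k 0) + (eps ^+ 2)%:C * (conjc (phi k 0) * phi k 0))); last first.
    by move=> k _; rewrite /w mxEadd mxEscale; exact: id_N.
  rewrite !big_split /= -!mulr_sumr -conjc_sum -!braketE hphi k00 mulr1 cplx_id.
  by [].
have trw : \sum_k nrm2 (w k 0) = \sum_i nrm2 (t i 0) + eps ^+ 2 * \sum_i \sum_j nrm2 (Yd i j).
  have := congr1 (fun M : 'M[R[i]]_m => \sum_i M i i) hcore.
  rewrite /= ptraceB_trace => H.
  apply: realC_inj; rewrite sumC.
  rewrite (eq_bigr (fun k => ketbra w w k k)); last by move=> k _; rewrite ketbraE mul_conjc.
  rewrite H.
  rewrite (eq_bigr (fun i => (nrm2 (t i 0) + eps ^+ 2 * \sum_j nrm2 (Yd i j))%:C)); last first.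
    by move=> i _; rewrite mxEadd mxEscale !diag_XadjX big_ord1 realCD realCM.
  by rewrite -sumC big_split /= -mulr_sumr.
have yy0 : 0 < yy.
  have yyE' : yy = \sum_k nrm2 (y k 0) by rewrite /yy braket_nrm Re_real.
  rewrite lt_def; apply/andP; split; last first.
    by rewrite yyE'; apply: sumr_ge0 => k _; exact: nrm2_ge0.
  apply/negP => /eqP yz; move: yn0; rewrite yyE' in yz.
  have H := psumr_eq0P (fun k _ => nrm2_ge0 (y k 0)) yz.
  suff -> : y = 0 by rewrite eqxx.
  by apply/matrixP => k l; rewrite (ord1 l) [RHS]mxE; apply: nrm2_eq0; rewrite H.
have N0 : 0 < N.
  rewrite lt_def; apply/andP; split; last first.
    by rewrite -Nw; apply: sumr_ge0 => k _; exact: nrm2_ge0.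
  apply/negP => /eqP Nz; rewrite -Nw in Nz.
  have H := psumr_eq0P (fun k _ => nrm2_ge0 (w k 0)) Nz.
  have hk k : nrm2 (ket0 k 0) = eps ^+ 2 * nrm2 (phi k 0).
    have /nrm2_eq0 := H k isT; rewrite /w mxEadd mxEscale => /eqP.
    by rewrite addr_eq0 => /eqP ->; rewrite nrm2N nrm2_sc.
  have : 1 = eps ^+ 2.
    by rewrite -nk (eq_bigr _ (fun k _ => hk k)) -mulr_sumr nphi mulr1.
  have : eps ^+ 2 < 1 by rewrite expr_lt1 // ltW.
  by move=> /[swap] <-; rewrite ltxx.
pose s := (Num.sqrt N)^-1.
have s2 : s ^+ 2 = N^-1 by rewrite /s exprVn sqr_sqrtr // ltW.
pose u := s%:C *: t.
have muyy : mu * yy^-1 = s ^+ 2 * eps ^+ 2.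
  by rewrite s2 /mu; field; rewrite ?gt_eqF.
have rhoE : rhoA = u *m adj u + mu%:C *: ((yy^-1)%:C *: (Yd *m adj Yd)).
  rewrite /rhoA (_ : psi = s%:C *: w) // ketbra_scale ptraceB_scale hcore.
  rewrite scalerDr /u adjZr -scalemxAr -scalemxAl !scalerA -!realCM muyy.
  by rewrite expr2 mulrC.
have omE : omega = (yy^-1)%:C *: (Yd *m adj Yd) by rewrite /omega ptraceB_ketbra.
have uE : complex.Re ((adj u *m u) 0 0) = 1 - mu.
  rewrite diag_adjXX Re_real.
  rewrite (eq_bigr (fun k => s ^+ 2 * nrm2 (t k 0))); last first.
    by move=> k _; rewrite /u mxEscale nrm2_sc.
  have tE : \sum_k nrm2 (t k 0) = N - eps ^+ 2 * yy by rewrite yyE -Nw trw addrK.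
  by rewrite -mulr_sumr tE s2 /mu; field; rewrite gt_eqF.
have hd : 0 <= yy^-1 by rewrite invr_ge0 ltW.
have mu0 : 0 < mu by rewrite /mu divr_gt0 // mulr_gt0 // exprn_gt0.
have K := @key R alpha mu (yy^-1) m n u Yd hal (ltW mu0) hd.
rewrite -rhoE -omE uE in K.
have T0 : 0 < trpow omega alpha.
  rewrite omE; apply: trpow_pos => //; by rewrite -yyE mulVf // gt_eqF.
split; first exact: K.
have /andP[Kl Ku] := K.
have /andP[al0 al1] := hal.
have pm : 0 < powR mu alpha by exact: powR_gt0.
have Tr0 : 0 < trpow rhoA alpha by exact: lt_le_trans (mulr_gt0 pm T0) Kl.
have a1 : 1 - alpha != 0 by rewrite subr_eq0 eq_sym lt_eqF.
have ia : 0 < (1 - alpha)^-1 by rewrite invr_gt0 subr_gt0.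
rewrite /renyi; apply/andP; split.
  have h : ln (powR mu alpha * trpow omega alpha) <= ln (trpow rhoA alpha).
    by rewrite ler_ln ?posrE // mulr_gt0.
  rewrite lnM ?posrE // ln_powR in h.
  have -> : (1 - alpha)^-1 * ln (trpow omega alpha) + alpha / (1 - alpha) * ln mu
      = (1 - alpha)^-1 * (alpha * ln mu + ln (trpow omega alpha)) by field.
  by rewrite ler_pM2l.
rewrite mulrA mulfV // mul1r lnK ?posrE //.
rewrite ler_pM2l // ler_ln ?posrE //.
by apply: ltr_wpDl; [exact: powR_ge0 | exact: mulr_gt0].
Qed.
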